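(* $\mathscr{F}_4\supseteq\mathscr{F}_{\mathrm{AIFV}}$.
   Context: $\mathcal{S}$ is a finite source alphabet with $|\mathcal{S}|\ge 2$ and $\mathcal{C}=\{0,1\}$; $\mathcal{A}^k,\mathcal{A}^{\ast},\mathcal{A}^{+}$ are sequences of length $k$, finite, positive finite length; $\lambda$ empty sequence; $\preceq$ prefix, $\prec$ proper prefix; $\mathrm{suff}(x_1\cdots x_n)=x_2\cdots x_n$. A code-tuple $F$ with $m\ge1$ code tables consists of maps $f_i:\mathcal{S}\to\mathcal{C}^{\ast}$ and $\tau_i:\mathcal{S}\to\{0,\dots,m-1\}$, $i\in[F]=\{0,\dots,m-1\}$; $|F|=m$. $f_i^{\ast}(\lambda)=\lambda$, $f_i^{\ast}(\pmb{x})=f_i(x_1)f^{\ast}_{\tau_i(x_1)}(\mathrm{suff}(\pmb{x}))$. For integer $k\ge0$, $\pmb{b}\in\mathcal{C}^{\ast}$: $\mathcal{P}^k_{F,i}(\pmb{b})$ is the set of $\pmb{c}\in\mathcal{C}^k$ such that some $\pmb{x}=x_1\cdots x_n\in\mathcal{S}^{+}$ has $f_i^{\ast}(\pmb{x})\succeq\pmb{b}\pmb{c}$ and $f_i(x_1)\succeq\pmb{b}$; $\bar{\mathcal{P}}^k_{F,i}(\pmb{b})$ the same with $f_i(x_1)\succ\pmb{b}$; $\mathcal{P}^k_{F,i}=\mathcal{P}^k_{F,i}(\lambda)$. $F$ is $2$-bit delay decodable ($F\in\mathscr{F}_{2\text{-}\mathrm{dec}}$) if $\mathcal{P}^2_{F,\tau_i(s)}\cap\bar{\mathcal{P}}^2_{F,i}(f_i(s))=\emptyset$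 for all $i,s$, and $\mathcal{P}^2_{F,\tau_i(s)}\cap\mathcal{P}^2_{F,\tau_i(s')}=\emptyset$ whenever $s\ne s'$, $f_i(s)=f_i(s')$. Fix $\mu:\mathcal{S}\to(0,1]$ with $\sum_s\mu(s)=1$; $Q(F)$ is the $|F|\times|F|$ matrix with $Q_{i,j}(F)=\sum_{s:\tau_i(s)=j}\mu(s)$; $F$ is regular ($F\in\mathscr{F}_{\mathrm{reg}}$) if $\pmb{\pi}Q(F)=\pmb{\pi}$, $\sum_i\pi_i=1$ has a unique solution. $\mathscr{F}_4$ is the set of $F\in\mathscr{F}_{\mathrm{reg}}\cap\mathscr{F}_{2\text{-}\mathrm{dec}}$ with $|F|=2$, $\mathcal{P}^2_{F,0}=\{00,01,10,11\}$ and $\mathcal{P}^2_{F,1}=\{01,10,11\}$. $\mathscr{F}_{\mathrm{AIFV}}$ is the set of code-tuples $F$ with $|F|=2$ satisfying: (i) $f_0,f_1$ injective; (ii) for all $i\in\{0,1\}$, $s$: $1\notin\bar{\mathcal{P}}^1_{F,i}(f_i(s))$ and $1\notin\bar{\mathcal{P}}^1_{F,i}(f_i(s)0)$; (iii) $f_i(s')\ne f_i(s)0$ for all $i,s,s'$; (iv) $\tau_i(s)=0$ if $\bar{\mathcal{P}}^0_{F,i}(f_i(s))=\emptyset$, and $\tau_i(s)=1$ otherwise; (v) $f_1(s)\ne\lambda$ and $f_1(s)\ne0$ for all $s$; (vi) $0\notin\bar{\mathcal{P}}^1_{F,1}(0)$; (vii) for all $i\in\{0,1\}$, $\pmb{b}\in\mathcal{C}^{\ast}$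 with $|\bar{\mathcal{P}}^1_{F,i}(\pmb{b})|=1$: either $f_i(s)\pmb{c}=\pmb{b}$ for some $s\in\mathcal{S}$, $\pmb{c}\in\mathcal{C}^0\cup\mathcal{C}^1$, or $(i,\pmb{b})=(1,0)$. *)

(* Defs.v *)
From HB Require Import structures.
From mathcomp Require Import all_boot all_order all_algebra.
Set Implicit Arguments. Unset Strict Implicit. Unset Printing Implicit Defensive.
Import Order.TTheory GRing.Theory Num.Theory.

(* Code alphabet C = {0,1} is encoded as bool: 0 = false, 1 = true.
   Codewords are seq bool; lambda = [::]; prefix = seq.prefix. *)

Record code_tuple (S : Type) (m : nat) := CodeTuple {
  ctf : 'I_m -> S -> seq bool;
  ctt : 'I_m -> S -> 'I_m
}.

Definition i0 : 'I_2 := @Ordinal 2 0 isT.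
Definition i1 : 'I_2 := @Ordinal 2 1 isT.

Section CT.
Variables (S : Type) (m : nat) (F : code_tuple S m).

Fixpoint fstar (i : 'I_m) (x : seq S) : seq bool :=
  match x with
  | [::] => [::]
  | s :: x' => ctf F i s ++ fstar (ctt F i s) x'
  end.

Definition pprefix (b w : seq bool) : bool := prefix b w && (b != w).

Definition Pk (k : nat) (i : 'I_m) (b c : seq bool) : Prop :=
  size c = k /\
  exists (s : S) (x' : seq S),
    prefix (b ++ c) (fstar i (s :: x')) /\ prefix b (ctf F i s).

Definition Pbk (k : nat) (i : 'I_m) (b c : seq bool) : Prop :=
  size c = k /\
  exists (s : S) (x' : seq S),
    prefix (b ++ c) (fstar i (s :: x')) /\ pprefix b (ctf F i s).

Definition dec2 : Prop :=
  (forall (i : 'I_m) (s : S) (c : seq bool),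
      ~ (Pk 2 (ctt F i s) [::] c /\ Pbk 2 i (ctf F i s) c)) /\
  (forall (i : 'I_m) (s s' : S), s <> s' -> ctf F i s = ctf F i s' ->
      forall c : seq bool,
      ~ (Pk 2 (ctt F i s) [::] c /\ Pk 2 (ctt F i s') [::] c)).
End CT.

Section Reg.
Variables (R : realFieldType) (S : finType) (mu : S -> R) (m : nat)
          (F : code_tuple S m).

Definition Qmx : 'M[R]_m :=
  (\matrix_(i, j) \sum_(s | ctt F i s == j) mu s)%R.

Definition regular : Prop :=
  exists! pi : 'rV[R]_m,
    ((pi *m Qmx)%R = pi /\ (\sum_(i < m) pi ord0 i)%R = 1%R).
End Reg.

Section Classes.
Variables (R : realFieldType) (S : finType) (mu : S -> R).

Definition in_F4 (F : code_tuple S 2) : Prop :=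
  regular mu F /\ dec2 F /\
  (forall c, Pk F 2 i0 [::] c <->
     c \in [:: [:: false; false]; [:: false; true];
               [:: true; false]; [:: true; true]]) /\
  (forall c, Pk F 2 i1 [::] c <->
     c \in [:: [:: false; true]; [:: true; false]; [:: true; true]]).

Definition in_FAIFV (F : code_tuple S 2) : Prop :=
  (* (i) *)
  injective (ctf F i0) /\ injective (ctf F i1) /\
  (* (ii) *)
  (forall (i : 'I_2) (s : S),
     ~ Pbk F 1 i (ctf F i s) [:: true] /\
     ~ Pbk F 1 i (ctf F i s ++ [:: false]) [:: true]) /\
  (* (iii) *)
  (forall (i : 'I_2) (s s' : S), ctf F i s' <> ctf F i s ++ [:: false]) /\
  (* (iv) *)
  (forall (i : 'I_2) (s : S),
     ((forall c, ~ Pbk F 0 i (ctf F i s) c) -> ctt F i s = i0) /\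
     ((exists c, Pbk F 0 i (ctf F i s) c) -> ctt F i s = i1)) /\
  (* (v) *)
  (forall s : S, ctf F i1 s <> [::] /\ ctf F i1 s <> [:: false]) /\
  (* (vi) *)
  ~ Pbk F 1 i1 [:: false] [:: false] /\
  (* (vii) *)
  (forall (i : 'I_2) (b : seq bool),
     (exists c0, forall c, Pbk F 1 i b c <-> c = c0) ->
     (exists (s : S) (c : seq bool), size c <= 1 /\ ctf F i s ++ c = b)
     \/ (i = i1 /\ b = [:: false])).
End Classes.

(* Main.v *)
Require Import Defs.
From HB Require Import structures.
From mathcomp Require Import all_boot all_order all_algebra ring lra.
Import Order.TTheory GRing.Theory Num.Theory.
Set Implicit Arguments. Unset Strict Implicit.

Lemma prefix_cat_small (u v w : seq bool) :
  size u <= size v -> prefix u (v ++ w) -> prefix u v.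
Proof.
move=> Hs; rewrite !prefixE take_cat; case: ltnP => H //.
have E : size u = size v by apply/eqP; rewrite eqn_leq Hs H.
by rewrite E subnn take0 cats0 take_size.
Qed.

Lemma prefix_cat2 (u c r : seq bool) : prefix (u ++ c) (u ++ r) = prefix c r.
Proof. by rewrite prefix_catr // eqxx. Qed.

Lemma pprefix_size (b w : seq bool) : pprefix b w -> size b < size w.
Proof.
move=> /andP [H1 H2]; rewrite ltn_neqAle size_prefix // andbT.
apply: contra H2 => /eqP Hs; move: H1; rewrite prefixE Hs take_size eq_sym //.
Qed.

Lemma ord2 (j : 'I_2) : j = i0 \/ j = i1.
Proof. case: j => [[|[|//]]] H; [left|right]; exact: val_inj. Qed.

Lemma i0i1 : i0 <> i1. Proof. by move/(congr1 val). Qed.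

Definition start (S : Type) (F : code_tuple S 2) i c :=
  exists s x', prefix c (fstar F i (s :: x')).

Lemma Pk2_start (S : Type) (F : code_tuple S 2) i c :
  Pk F 2 i [::] c <-> size c = 2 /\ start F i c.
Proof.
split => [[Hs [s [x' [H _]]]]|[Hs [s [x' H]]]]; split => //.
  by exists s, x'.
by exists s, x'; split => //; rewrite prefix0s.
Qed.

Lemma start_word (S : Type) (F : code_tuple S 2) i s c :
  prefix c (ctf F i s) -> start F i c.
Proof. by move=> H; exists s, [::]; rewrite /=; apply: prefix_catl. Qed.

Lemma start_cons (S : Type) (F : code_tuple S 2) i s c :
  start F (ctt F i s) c -> start F i (ctf F i s ++ c).
Proof. by move=> [s' [x' H]]; exists s, (s' :: x'); rewrite [fstar _ _ _]/= prefix_cat2. Qed.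

Lemma Pbk1_iff (S : Type) (F : code_tuple S 2) i b c :
  Pbk F 1 i b c <-> size c = 1 /\ exists s, prefix (b ++ c) (ctf F i s).
Proof.
split.
- move=> [Hc [s [x' [H1 H2]]]]; split => //; exists s.
  rewrite /= in H1; apply: prefix_cat_small H1.
  by rewrite size_cat Hc addn1; apply: pprefix_size.
- move=> [Hc [s H]]; split => //; exists s, [::]; split.
    by rewrite /= cats0.
  rewrite /pprefix (catl_prefix H) /=; apply/eqP => E.
  by move: (size_prefix H); rewrite size_cat -E Hc addn1 ltnn.
Qed.

Lemma Pbk0_iff (S : Type) (F : code_tuple S 2) i b c :
  Pbk F 0 i b c <-> c = [::] /\ exists s, pprefix b (ctf F i s).
Proof.
split.
- by move=> [/size0nil Hc [s [x' [_ H]]]]; split => //; exists s.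
- move=> [-> [s H]]; split => //; exists s, [::]; split => //.
  by rewrite /= !cats0; case/andP: H.
Qed.

Lemma children (S : finType) (F : code_tuple S 2) (H : in_FAIFV F) i b beta :
  (exists s, prefix (b ++ [:: beta]) (ctf F i s)) ->
  ~ (exists s c, size c <= 1 /\ ctf F i s ++ c = b) ->
  ~ (i = i1 /\ b = [:: false]) ->
  forall g, exists s, prefix (b ++ [:: g]) (ctf F i s).
Proof.
case: H => _ [_ [_ [_ [_ [_ [_ H8]]]]]].
move=> Hb Hnc Hex g.
case: (boolP [exists s, prefix (b ++ [:: ~~ beta]) (ctf F i s)]) => [/existsP [s Hs]|Hn].
  by case: g beta Hb Hs => [] [] //= Hb Hs; exists s.
exfalso.
have : exists c0 : seq bool, forall c, Pbk F 1 i b c <-> c = c0.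
  exists [:: beta] => c; rewrite Pbk1_iff; split.
    move=> [Hc [s Hs]]; case: c Hc Hs => [|d [|]] //= _ Hs.
    case: d beta Hb Hs Hn => [] [] //= _ Hs Hn;
      by move/negP: Hn; case; apply/existsP; exists s.
  by move=> ->; split.
by move/H8 => [//|].
Qed.

Lemma root_children (S : finType) (F : code_tuple S 2) (H : in_FAIFV F) i (s0 : S) :
  (forall s, ctf F i s != [::]) ->
  forall g, exists s, prefix [:: g] (ctf F i s).
Proof.
move=> Hne g.
case E : (ctf F i s0) (Hne s0) => [|d r] // _.
apply: (@children S F H i [::] d).
- by exists s0; rewrite E /= eqxx prefix0s.
- move=> [s [c [_ E']]]; move: (Hne s) E'; by case: (ctf F i s).
- by case.
Qed.

Lemma other (S : finType) (HS : 1 < #|S|) (a : S) : exists s, s != a.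
Proof.
case/card_gt1P: HS => x [y [_ _ Hxy]].
case: (eqVneq x a) => [Ex|]; last by exists x.
by exists y; rewrite -Ex eq_sym.
Qed.

Lemma tau_int (S : finType) (F : code_tuple S 2) (H : in_FAIFV F) i s s' :
  pprefix (ctf F i s) (ctf F i s') -> ctt F i s = i1.
Proof.
case: H => _ [_ [_ [_ [H5 _]]]] Hp.
apply: (proj2 (H5 i s)); exists [::]; rewrite Pbk0_iff; split => //; by exists s'.
Qed.

Lemma tau_leaf (S : finType) (F : code_tuple S 2) (H : in_FAIFV F) i s :
  (forall s', ~~ pprefix (ctf F i s) (ctf F i s')) -> ctt F i s = i0.
Proof.
case: H => _ [_ [_ [_ [H5 _]]]] Hp.
apply: (proj1 (H5 i s)) => c; rewrite Pbk0_iff => [[_ [s' Hs]]].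
by move: (Hp s'); rewrite Hs.
Qed.

Lemma first1 (S : finType) (HS : 1 < #|S|) (F : code_tuple S 2) (H : in_FAIFV F) g :
  exists s, prefix [:: g] (ctf F i1 s).
Proof.
case/card_gt1P: HS => s0 _.
apply: (root_children H s0) => s.
case: H => _ [_ [_ [_ [_ [H6 _]]]]].
by case: (H6 s) => /eqP.
Qed.

Lemma first (S : finType) (HS : 1 < #|S|) (F : code_tuple S 2) (H : in_FAIFV F) j g :
  start F j [:: g].
Proof.
have F1 : forall g, start F i1 [:: g].
  by move=> g'; case: (first1 HS H g') => s Hs; apply: start_word Hs.
case: (ord2 j) => -> //.
case: (boolP [exists s, ctf F i0 s == [::]]) => [/existsP [a /eqP Ea]|Hn].
  case: (other HS a) => s' Hs'.
  have Hne : ctf F i0 s' != [::].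
    apply: contra Hs' => /eqP E; apply/eqP.
    case: H => H1 _; apply: H1; by rewrite E Ea.
  have Ht : ctt F i0 a = i1.
    apply: (tau_int H (s' := s')).
    by rewrite /pprefix Ea prefix0s /= eq_sym.
  have := F1 g; rewrite -Ht => Hst; have := start_cons Hst; by rewrite Ea.
case/card_gt1P: HS => s0 _.
have [|s Hs] := @root_children S F H i0 s0 _ g.
  move=> s; apply: contra Hn => /eqP E; apply/existsP; exists s; by rewrite E.
by apply: start_word Hs.
Qed.

Lemma node (S : finType) (HS : 1 < #|S|) (F : code_tuple S 2) (H : in_FAIFV F) i beta :
  (exists s, prefix [:: beta] (ctf F i s)) ->
  (forall s, ctf F i s != [::]) -> ~ (i = i1 /\ beta = false) ->
  forall g, start F i [:: beta; g].
Proof.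
move=> [s Hs] Hne Hex g.
case: (boolP [exists a, ctf F i a == [:: beta]]) => [/existsP [a /eqP Ea]|Hn].
  by have := start_cons (first HS H (ctt F i a) g); rewrite Ea.
case E : (ctf F i s) Hs => [|x [|d r]] //=.
  rewrite andbT => /eqP Ex; move/negP: Hn; case; apply/existsP; exists s.
  by rewrite E Ex.
case/andP => /eqP Ex _.
have [|||s'' Hs''] := @children S F H i [:: beta] d _ _ _ g.
- by exists s; rewrite E Ex /= !eqxx prefix0s.
- move=> [s' [c [_ E']]]; move: (Hne s') E'.
  case E2 : (ctf F i s') => [|y [|z r']] //= _.
  case: c => // [[Ey]]; move/negP: Hn; case; apply/existsP; exists s'.
  by rewrite E2 Ey.
- by case=> Hi [Hb]; apply: Hex.
by apply: (start_word (s := s'')).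
Qed.

Lemma no00 (S : finType) (F : code_tuple S 2) (H : in_FAIFV F) :
  ~ start F i1 [:: false; false].
Proof.
move=> [s [x' Hp]].
case: H => _ [_ [_ [_ [_ [H6 [H7 _]]]]]].
move: (H6 s) Hp; rewrite /=.
case E : (ctf F i1 s) => [|x [|y r]] [Hn1 Hn0] //=.
  case: x E Hn1 Hn0 => // E _ Hn0 /andP [_ _]; by apply: Hn0.
case: x E Hn1 Hn0 => //; case: y => // E _ _ _.
apply: H7; rewrite Pbk1_iff; split => //; exists s; by rewrite E /= prefix0s.
Qed.

Lemma start01 (S : finType) (HS : 1 < #|S|) (F : code_tuple S 2) (H : in_FAIFV F) :
  start F i1 [:: false; true].
Proof.
have [s Hs] := first1 HS H false.
apply: (start_word (s := s)).
move: H => [_ [_ [_ [_ [_ [H6 [H7 _]]]]]]].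
move: (H6 s) Hs.
case E : (ctf F i1 s) => [|x [|y r]] [Hn1 Hn0] //=.
  by case: x E Hn1 Hn0.
case: x E Hn1 Hn0 => // E _ _ _; case: y E => E; first by rewrite /= prefix0s.
exfalso; apply: H7; rewrite Pbk1_iff; split => //; exists s; by rewrite E /= prefix0s.
Qed.

Lemma P1 (S : finType) (HS : 1 < #|S|) (F : code_tuple S 2) (H : in_FAIFV F) c :
  Pk F 2 i1 [::] c <-> c \in [:: [:: false; true]; [:: true; false]; [:: true; true]].
Proof.
rewrite Pk2_start; split.
  move=> [Hc Hst]; case: c Hc Hst => [|a [|b [|]]] //= _.
  by case: a; case: b => // Hst; exfalso; apply: (no00 H Hst).
rewrite !inE => /or3P [] /eqP -> ; split => //; first exact: start01.
all: apply: (node HS H (first1 HS H true)) => //; last by case.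
all: move=> s; case: H => _ [_ [_ [_ [_ [H6 _]]]]]; apply/eqP; exact: (H6 s).1.
Qed.

Lemma P0 (S : finType) (HS : 1 < #|S|) (F : code_tuple S 2) (H : in_FAIFV F) c :
  Pk F 2 i0 [::] c <-> c \in [:: [:: false; false]; [:: false; true];
               [:: true; false]; [:: true; true]].
Proof.
have all0 : forall b g, start F i0 [:: b; g].
  case: (boolP [exists s, ctf F i0 s == [::]]) => [/existsP [a /eqP Ea]|Hn].
    case: (other HS a) => s' Hs'.
    have Hne : ctf F i0 s' != [::].
      apply: contra Hs' => /eqP E; apply/eqP.
      case: H => H1 _; apply: H1; by rewrite E Ea.
    have Ht : ctt F i0 a = i1.
      apply: (tau_int H (s' := s')).
      by rewrite /pprefix Ea prefix0s /= eq_sym.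
    have H1c : forall c, c != [:: false; false] -> size c = 2 -> start F i0 c.
      move=> c' Hc' Hs.
      have : Pk F 2 i1 [::] c'.
        rewrite P1 //; case: c' Hc' Hs => [|x [|y [|]]] //=.
        by case: x; case: y.
      rewrite Pk2_start => [[_]]; rewrite -Ht => Hst.
      by have := start_cons Hst; rewrite Ea.
    move=> b g; case: b; first by apply: H1c.
    case: g; first by apply: H1c.
    case: H => _ [_ [H3 [H4 _]]].
    move: Hne; case E : (ctf F i0 s') => [|x [|y r]] // _.
      case: x E => E.
        by exfalso; apply: (H3 i0 a).1; rewrite Pbk1_iff Ea; split => //; exists s'; rewrite E.
      by exfalso; apply: (H4 i0 a s'); rewrite E Ea.
    case: x E => E.
      by exfalso; apply: (H3 i0 a).1; rewrite Pbk1_iff Ea; split => //; exists s'; rewrite E /= ?prefix0s.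
    case: y E => E.
      by exfalso; apply: (H3 i0 a).2; rewrite Pbk1_iff Ea; split => //; exists s'; rewrite E /= ?prefix0s.
    by apply: (start_word (s := s')); rewrite E /= ?prefix0s.
  have Hne : forall s, ctf F i0 s != [::].
    move=> s; apply: contra Hn => /eqP E; apply/existsP; exists s; by rewrite E.
  case/card_gt1P: (HS) => s0 _.
  move=> b g; apply: (node HS H) => //.
    exact: (root_children H s0 Hne).
  by case => /i0i1.
rewrite Pk2_start; split.
  move=> [Hc Hst]; case: c Hc Hst => [|a [|b [|]]] //= _.
  by case: a; case: b.
by rewrite !inE => /or4P [] /eqP -> ; split => //; apply: all0.
Qed.

Lemma dec2_ok (S : finType) (HS : 1 < #|S|) (F : code_tuple S 2) (H : in_FAIFV F) :
  dec2 F.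
Proof.
split.
  move=> i s c [HP [Hc [s' [x' [Hp Hpp]]]]].
  have Ht := tau_int H Hpp; rewrite Ht in HP.
  case: (H) => _ [_ [H3 [H4 _]]].
  case/andP: (Hpp) => /prefixP [r Er] Hneq.
  case: r Er Hneq => [|x [|y r]] Er Hneq.
  - by rewrite Er cats0 eqxx in Hneq.
  - case: x Er Hneq => Er _.
      by apply: (H3 i s).1; rewrite Pbk1_iff; split => //; exists s'; rewrite Er prefix_refl.
    exact: (H4 i s s' Er).
  - case: x Er Hneq => Er _.
      by apply: (H3 i s).1; rewrite Pbk1_iff; split => //; exists s'; rewrite Er prefix_cat2 /= ?prefix0s.
    case: y Er => Er.
      by apply: (H3 i s).2; rewrite Pbk1_iff; split => //; exists s'; rewrite Er -catA prefix_cat2 /= ?prefix0s.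
    rewrite /= Er -catA prefix_cat2 in Hp.
    case: c Hc HP Hp => [|a [|b [|]]] //= _ HP.
    case: a HP => //; case: b => // HP _.
    by move: HP; rewrite Pk2_start => [[_ /(no00 H)]].
move=> i s s' Hne E c _.
case: H => H1 [H2 _].
by case: (ord2 i) => Ei; subst i; apply: Hne; [apply: H1 | apply: H2].
Qed.
Local Open Scope ring_scope.

Lemma sum2 (R : realFieldType) (f : 'I_2 -> R) : \sum_(i < 2) f i = f i0 + f i1.
Proof.
rewrite big_ord_recl big_ord_recl big_ord0 addr0.
by congr (f _ + f _); apply: val_inj.
Qed.

Lemma stat2 (R : realFieldType) (Q : 'M[R]_2) (a b : R) :
  Q i0 i1 = a -> Q i1 i0 = b -> Q i0 i0 = 1 - a -> Q i1 i1 = 1 - b ->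
  0 <= a -> 0 < b ->
  exists! pi : 'rV[R]_2, pi *m Q = pi /\ \sum_(i < 2) pi ord0 i = 1.
Proof.
move=> Ha Hb Haa Hbb a0 b0.
have ab0 : 0 < a + b by lra.
have ab : a + b != 0 by rewrite gt_eqF.
have Hmul : forall (p : 'rV[R]_2) j,
    (p *m Q) ord0 j = p ord0 i0 * Q i0 j + p ord0 i1 * Q i1 j.
  by move=> p j; rewrite mxE sum2.
have e00 : (i0 == i0) = true by [].
have e10 : (i1 == i0) = false by [].
exists (\row_(j < 2) (if j == i0 then b / (a + b) else a / (a + b))); split.
  split.
    apply/rowP => j; rewrite Hmul !mxE.
    case: (ord2 j) => ->; rewrite ?Haa ?Ha ?Hb ?Hbb e00 e10; field => //.
  by rewrite sum2 !mxE e00 e10; field.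
move=> p [Hp Hs].
have e0 := congr1 (fun M : 'rV[R]_2 => M ord0 i0) Hp; rewrite /= Hmul Haa Hb in e0.
rewrite sum2 in Hs.
set x := p ord0 i0 in e0 Hs *; set y := p ord0 i1 in e0 Hs *.
have Hx : x = 1 - y by lra.
rewrite Hx in e0.
have hy : y * (a + b) = a by nra.
have ey : y = a / (a + b) by apply: (mulIf ab); rewrite hy mulfVK.
apply/rowP => j; rewrite !mxE.
case: (ord2 j) => ->; rewrite ?e00 ?e10 -/x -/y.
  by rewrite Hx ey; field.
by rewrite ey.
Qed.
Local Close Scope ring_scope.
Unset Implicit Arguments.

Theorem lemma11 (R : realFieldType) (S : finType) (mu : S -> R)
  (HS : 1 < #|S|)
  (Hmu_pos : forall s, (0 < mu s)%R) (Hmu_le1 : forall s, (mu s <= 1)%R)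
  (Hmu_sum : (\sum_(s : S) mu s = 1)%R)
  (F : code_tuple S 2) :
  in_FAIFV F -> in_F4 mu F.
Proof.
move=> H; split; last first.
  split; first exact: dec2_ok.
  by split => c; [apply: P0 | apply: P1].
have rowsum : forall i, (Qmx mu F i i0 + Qmx mu F i i1 = 1)%R.
  move=> i; rewrite !mxE -Hmu_sum [in RHS](bigID (fun s => ctt F i s == i0)) /=.
  congr (_ + _)%R; apply: eq_bigl => s.
  by case: (ord2 (ctt F i s)) => ->.
case/card_gt1P: (HS) => s0 _.
have [smax _ Hmax] := @arg_maxnP S s0 xpredT (fun s => size (ctf F i1 s)) isT.
have Ht : ctt F i1 smax = i0.
  apply: (tau_leaf H) => s'; apply/negP => /pprefix_size.
  by have := Hmax s' isT; rewrite /= ltnNge => ->.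
apply: (stat2 (a := Qmx mu F i0 i1) (b := Qmx mu F i1 i0)) => //.
- by have := rowsum i0; lra.
- by have := rowsum i1; lra.
- by rewrite mxE; apply: sumr_ge0 => s _; apply: ltW.
- rewrite mxE (bigD1 smax) /=; last by rewrite Ht.
  have h := Hmu_pos smax.
  have h2 : (0 <= \sum_(s | (ctt F i1 s == i0) && (s != smax)) mu s)%R.
    by apply: sumr_ge0 => s _; apply: ltW.
  lra.
Qed.
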